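(* The knowledge state algorithm $K_3$ for the $3$-cache problem is $\tfrac{11}{6}$-competitive (note $\tfrac{11}{6}=H_3=1+\tfrac12+\tfrac13$): there is a constant $K$ such that $E(\mathrm{cost}_{K_3}(\varrho))\le\tfrac{11}{6}\,\mathrm{cost}_{\mathrm{opt}}(\varrho)+K$ for every finite request sequence $\varrho$.
   Context: The $k$-cache problem: there is an infinite set $P$ of pages; the state set $\mathcal X$ is the set of $k$-element subsets of $P$ (cache contents), with a given initial cache $s^0$; the requests are the pages, $\mathcal R=P$; $d(x,y)=|x\setminus y|$; and $\mathrm{cost}(x,r,y)=2$ if $x=y$ and $r\notin x$; $\mathrm{cost}(x,r,y)=d(x,y)$ if $r\in x$ or $r\in y$; $\mathrm{cost}(x,r,y)=d(x,y)+1$ otherwise. For $\varrho=r^1\dots r^n$, $\mathrm{cost}_{\mathrm{opt}}(\varrho)$ is the minimum of $\sum_t\mathrm{cost}(x^{t-1},r^t,x^t)$ over $x^1,\dots,x^n\in\mathcal X$ with $x^0=s^0$. $\Pi$ is the set of finitely supported probability distributions on $\mathcal X$; for $\pi,\pi'\in\Pi$, $\mathrm{cost}(\pi,r,\pi')$ is the minimum of $\sum_{x,y}\gamma(x,y)\mathrm{cost}(x,r,y)$ over distributions $\gamma$ on $\mathrm{supp}(\pi)\times\mathrm{supp}(\pi')$ with marginals $\pi,\pi'$. Bar notation: a string $\alpha$ of distinct page names and exactly $k$ bars, with at least $i$ page names to the left of the $i$-th bar, denotes the estimator $\omega_\alpha(y)=\min_{x\in S_\alpha}d(x,y)$, where $S_\alpha$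 is the set of configurations $x$ such that for each $i=1,\dots,k$ at least $i$ elements of $x$ are written to the left of the $i$-th bar. Algorithm $K_3$ ($k=3$; letters $a,\dots,f$ denote distinct pages; a configuration $\{x,y,z\}$ is written $xyz$). It is a randomized algorithm whose state is a pair (distribution, estimator). States: $A^{a,b,c}=(abc,\ abc|||)$ (symmetric in $a,b,c$); $B^{a,b,c,d}=(\tfrac13abc+\tfrac13abd+\tfrac13acd,\ a|bcd||)$ (symmetric in $b,c,d$); $C^{a,b,c,d}=(\tfrac12abc+\tfrac12abd,\ ab||cd|)$ (symmetric in $a,b$ and in $c,d$); $D^{a,b,c,d,e}=(\tfrac16(abc+abd+abe+acd+ace+ade),\ a|bcde||)$ (symmetric in $b,c,d,e$); $E^{a,b,c,d,e}=(\tfrac12abc+\tfrac14abd+\tfrac14abe,\ ab||cde|)$ (symmetric in $a,b$ and in $d,e$); $F^{a,b,c,d,e}=(\tfrac12abc+\tfrac18(abd+abe+acd+ace),\ a|bc|de|)$ (symmetric in $b,c$ and in $d,e$). Initial state $A^{a,b,c}$ with $s^0=\{a,b,c\}$. Transitions: From $A^{a,b,c}$: request $a,b$ or $c$: stay; request $d\notin\{a,b,c\}$: $B^{d,a,b,c}$. From $B^{a,b,c,d}$: request $a$: stay; request $b$: $C^{a,b,c,d}$ (symmetrically $c$: $C^{a,c,b,d}$, $d$: $C^{a,d,b,c}$); request $e\notin\{a,b,c,d\}$: $D^{e,a,b,c,d}$. From $C^{a,b,c,d}$: request $a$ or $b$: stay; request $c$: $A^{a,b,c}$; request $d$: $A^{a,b,d}$;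 request $e\notin\{a,b,c,d\}$: $F^{e,a,b,c,d}$. From $D^{a,b,c,d,e}$: request $a$: stay; request $x\in\{b,c,d,e\}$: $E^{a,x,y,z,w}$ where $y,z,w$ are the other three pages of $\{b,c,d,e\}$ in a fixed order; request $f\notin\{a,\dots,e\}$: each of the ten states $A^{f,u,v}$, $\{u,v\}\subseteq\{a,b,c,d,e\}$, with probability $\tfrac1{10}$. From $E^{a,b,c,d,e}$: request $a$ or $b$: stay; request $c$: $A^{a,b,c}$; $d$: $A^{a,b,d}$; $e$: $A^{a,b,e}$; request $f\notin\{a,\dots,e\}$: $A^{f,a,b}$. From $F^{a,b,c,d,e}$: request $a$: stay; $b$: $E^{a,b,c,d,e}$; $c$: $E^{a,c,b,d,e}$; $d$: $C^{a,d,b,c}$; $e$: $C^{a,e,b,c}$; request $f\notin\{a,\dots,e\}$: each of $C^{f,a,b,c},C^{f,b,a,c},C^{f,c,a,b},C^{f,a,d,e},C^{f,b,d,e},C^{f,c,d,e}$ with probability $\tfrac16$. The cost of a step from state $(\pi,\omega)$ on request $r$, whose successor states $(\pi_i,\omega_i)$ have probabilities $\lambda_i$, is $\mathrm{cost}(\pi,r,\sum_i\lambda_i\pi_i)$; $\mathrm{cost}_{K_3}(\varrho)$ is the (random) sum of step costs. *)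

(* Defs.v *)
From HB Require Import structures.
From mathcomp Require Import all_boot all_order all_algebra finmap.
From mathcomp Require Import boolp classical_sets reals.
Set Implicit Arguments. Unset Strict Implicit. Unset Printing Implicit Defensive.
Import Order.TTheory GRing.Theory Num.Theory.
Local Open Scope ring_scope.
Local Open Scope classical_set_scope.

Definition page := nat.
Definition config := {fset nat}.
Definition is_config (x : config) : bool := (#|` x| == 3)%N.

Definition dist (x y : config) : nat := #|` (x `\` y)%fset|.

Definition cost (x : config) (r : page) (y : config) : nat :=
  if (x == y) && (r \notin x) then 2%N
  else if (r \in x) || (r \in y) then dist x y
  else (dist x y).+1.

(* cost of a trajectory x^0 = x, x^1, ..., x^n (xs = [x^1;..;x^n]) *)
Fixpoint pathcost (x : config) (rho : seq page) (xs : seq config) : nat :=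
  match rho, xs with
  | r :: rho', y :: xs' => (cost x r y + pathcost y rho' xs')%N
  | _, _ => 0%N
  end.

Definition cost_opt {R : realType} (s0 : config) (rho : seq page) : R :=
  inf [set c : R | exists xs : seq config,
         [/\ size xs = size rho, all is_config xs & c = (pathcost s0 rho xs)%:R]].

(* Finitely supported distributions, given as weighted lists
   (the probability of x is the total weight of the entries equal to x). *)
Definition distr (R : realType) := seq (R * config).

Definition pmf {R : realType} (p : distr R) (x : config) : R :=
  \sum_(q <- p | q.2 == x) q.1.

Definition supp {R : realType} (p : distr R) : seq config :=
  [seq x <- undup (map snd p) | 0 < pmf p x].

Definition coupling_costs {R : realType} (p : distr R) (r : page) (p' : distr R)
  : set R :=
  [set c : R | exists gamma : config -> config -> R,
     [/\ forall x y, 0 <= gamma x y,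
         forall x, x \in supp p -> \sum_(y <- supp p') gamma x y = pmf p x,
         forall y, y \in supp p' -> \sum_(x <- supp p) gamma x y = pmf p' y
       & c = \sum_(x <- supp p) \sum_(y <- supp p') gamma x y * (cost x r y)%:R]].

Definition dcost {R : realType} (p : distr R) (r : page) (p' : distr R) : R :=
  inf (coupling_costs p r p').

(* States of K_3 (the estimator component does not influence the transitions
   nor the costs, so a state is determined by its type and its pages). *)
Inductive kstate :=
| SA of page & page & page
| SB of page & page & page & page
| SC of page & page & page & page
| SD of page & page & page & page & page
| SE of page & page & page & page & page
| SF of page & page & page & page & page.

Definition c3 (a b c : page) : config := [fset a; b; c]%fset.

Definition kdist {R : realType} (s : kstate) : distr R :=
  match s with
  | SA a b c => [:: (1, c3 a b c)]
  | SB a b c d => [:: (1/3, c3 a b c); (1/3, c3 a b d); (1/3, c3 a c d)]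
  | SC a b c d => [:: (1/2, c3 a b c); (1/2, c3 a b d)]
  | SD a b c d e => [:: (1/6, c3 a b c); (1/6, c3 a b d); (1/6, c3 a b e);
                        (1/6, c3 a c d); (1/6, c3 a c e); (1/6, c3 a d e)]
  | SE a b c d e => [:: (1/2, c3 a b c); (1/4, c3 a b d); (1/4, c3 a b e)]
  | SF a b c d e => [:: (1/2, c3 a b c); (1/8, c3 a b d); (1/8, c3 a b e);
                        (1/8, c3 a c d); (1/8, c3 a c e)]
  end.

Definition ktrans {R : realType} (s : kstate) (r : page) : seq (R * kstate) :=
  match s with
  | SA a b c =>
      if r \in [:: a; b; c] then [:: (1, s)] else [:: (1, SB r a b c)]
  | SB a b c d =>
      if r == a then [:: (1, s)]
      else if r == b then [:: (1, SC a b c d)]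
      else if r == c then [:: (1, SC a c b d)]
      else if r == d then [:: (1, SC a d b c)]
      else [:: (1, SD r a b c d)]
  | SC a b c d =>
      if (r == a) || (r == b) then [:: (1, s)]
      else if r == c then [:: (1, SA a b c)]
      else if r == d then [:: (1, SA a b d)]
      else [:: (1, SF r a b c d)]
  | SD a b c d e =>
      if r == a then [:: (1, s)]
      else if r == b then [:: (1, SE a b c d e)]
      else if r == c then [:: (1, SE a c b d e)]
      else if r == d then [:: (1, SE a d b c e)]
      else if r == e then [:: (1, SE a e b c d)]
      else [:: (1/10, SA r a b); (1/10, SA r a c); (1/10, SA r a d);
               (1/10, SA r a e); (1/10, SA r b c); (1/10, SA r b d);
               (1/10, SA r b e); (1/10, SA r c d); (1/10, SA r c e);
               (1/10, SA r d e)]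
  | SE a b c d e =>
      if (r == a) || (r == b) then [:: (1, s)]
      else if r == c then [:: (1, SA a b c)]
      else if r == d then [:: (1, SA a b d)]
      else if r == e then [:: (1, SA a b e)]
      else [:: (1, SA r a b)]
  | SF a b c d e =>
      if r == a then [:: (1, s)]
      else if r == b then [:: (1, SE a b c d e)]
      else if r == c then [:: (1, SE a c b d e)]
      else if r == d then [:: (1, SC a d b c)]
      else if r == e then [:: (1, SC a e b c)]
      else [:: (1/6, SC r a b c); (1/6, SC r b a c); (1/6, SC r c a b);
               (1/6, SC r a d e); (1/6, SC r b d e); (1/6, SC r c d e)]
  end.

Definition mixture {R : realType} (l : seq (R * kstate)) : distr R :=
  flatten [seq [seq (p.1 * q.1, q.2) | q <- kdist p.2] | p <- l].

Definition kstep_cost {R : realType} (s : kstate) (r : page) : R :=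
  dcost (kdist s) r (mixture (ktrans s r)).

Fixpoint kexp_cost {R : realType} (s : kstate) (rho : seq page) : R :=
  match rho with
  | [::] => 0
  | r :: rho' => kstep_cost s r + \sum_(p <- ktrans s r) p.1 * kexp_cost p.2 rho'
  end.

(* Main.v *)
Require Import Defs.
From HB Require Import structures.
From mathcomp Require Import all_boot all_order all_algebra finmap.
From mathcomp Require Import boolp classical_sets reals.
From mathcomp Require Import lra zify ring.
Set Implicit Arguments. Unset Strict Implicit. Unset Printing Implicit Defensive.
Import Order.TTheory GRing.Theory Num.Theory.
Local Open Scope ring_scope.

Section FsetLemmas.
Local Open Scope fset_scope.

Lemma cardD_U1 (A y : {fset nat}) (c : nat) :
  #|` (A `|` [fset c]) `\` y| = (#|` A `\` y| + ((c \notin y) && (c \notin A)))%N.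
Proof.
rewrite fsetUC.
have [cy|cy] := boolP (c \in y).
  rewrite addn0; congr #|` _|; apply/fsetP => q; rewrite !inE.
  by case: eqP => // ->; rewrite cy.
have -> : (c |` A) `\` y = c |` (A `\` y).
  by apply/fsetP => q; rewrite !inE; case: eqP => // ->; rewrite cy.
by rewrite cardfsU1 !inE cy /= addnC.
Qed.

Lemma card1D (u : nat) y : #|` [fset u] `\` y| = (u \notin y).
Proof.
have [uy|uy] /= := boolP (u \in y).
  apply/eqP; rewrite cardfs_eq0; apply/eqP.
  by apply/fsetP => q; rewrite !inE; case: (q =P u) => [->|_]; rewrite ?uy ?andbF.
have -> : [fset u] `\` y = [fset u].
  by apply/fsetP => q; rewrite !inE; case: (q =P u) => [->|_]; rewrite ?uy ?andbF.
by rewrite cardfs1.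
Qed.

Lemma dist_c3 u v w y :
  dist (c3 u v w) y = ((u \notin y) + ((v \notin y) && (v != u))
                       + ((w \notin y) && (w != u) && (w != v)))%N.
Proof. by rewrite /dist /c3 cardD_U1 cardD_U1 card1D !inE negb_or !andbA. Qed.

Lemma in_c3 q u v w : (q \in c3 u v w) = [|| q == u, q == v | q == w].
Proof. by rewrite /c3 !inE orbA. Qed.

Lemma costE (x : config) (r : page) (y : config) : cost x r y =
  (dist x y + ((r \notin x) && (r \notin y)) + ((x == y) && (r \notin x)))%N.
Proof.
rewrite /cost; have [->|nxy] := eqVneq x y; rewrite ?eqxx /=.
  by rewrite /dist fsetDv cardfs0; case: (r \in y).
by case: (r \in x); case: (r \in y); rewrite /= ?addn0 ?addn1.
Qed.

Lemma dist0 (x y : config) : (dist x y == 0%N) = (x `<=` y).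
Proof. by rewrite /dist cardfs_eq0 fsetD_eq0. Qed.

Lemma eq_cfg (x y : config) : (x == y) = (dist x y == 0%N) && (dist y x == 0%N).
Proof. by rewrite !dist0 eqEfsubset. Qed.

Lemma eq_cfg3 (x y : config) : #|` x| = #|` y| -> (x == y) = (dist x y == 0%N).
Proof.
move=> hs; rewrite eq_cfg dist0; case sxy: (x `<=` y) => //=.
rewrite dist0; move/(fsubset_cardP hs): sxy => exy.
by apply/fsubsetP => q; rewrite exy.
Qed.

Definition costc (z : config) (r : page) (y : config) : nat :=
  if (dist z y == 0%N) && (r \notin z) then 2%N
  else if (r \in z) || (r \in y) then dist z y else (dist z y).+1.

Lemma cost_costc (x : config) (r : page) (y : config) : #|` x| = #|` y| -> cost x r y = costc x r y.
Proof. by move=> h; rewrite /cost /costc eq_cfg3. Qed.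

Lemma dist_sym (x : config) (y : config) : #|` x| = #|` y| -> dist x y = dist y x.
Proof. by move=> h; rewrite /dist !cardfsD h fsetIC. Qed.

Lemma dist_tri (z : config) (x : config) (y : config) : (dist z y <= dist z x + dist x y)%N.
Proof.
rewrite /dist.
have S : z `\` y `<=` (z `\` x) `|` (x `\` y).
  by apply/fsubsetP => q; rewrite !inE; case: (q \in x); case: (q \in y); case: (q \in z).
apply: leq_trans (fsubset_leq_card S) _.
by rewrite cardfsU leq_subr.
Qed.

Lemma dist_tri_r (z : config) (x : config) (y : config) (r : page) : r \notin z -> r \in x -> r \notin y ->
  (dist z y + 1 <= dist z x + dist x y)%N.
Proof.
move=> rz rx ry; rewrite /dist.
rewrite [#|` x `\` y|](cardfsD1 r) !inE rx ry /= addnCA [(_ + 1)%N]addnC leq_add2l.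
have S : z `\` y `<=` (z `\` x) `|` ((x `\` y) `\ r).
  apply/fsubsetP => q; rewrite !inE.
  case: (q =P r) => [->|_]; first by rewrite (negbTE rz) andbF.
  by case: (q \in x); case: (q \in y); case: (q \in z).
apply: leq_trans (fsubset_leq_card S) _.
by rewrite cardfsU leq_subr.
Qed.

Lemma dist_pos_r (x : config) (y : config) (r : page) : r \in x -> r \notin y -> (0 < dist x y)%N.
Proof. by move=> rx ry; rewrite /dist (cardfsD1 r) !inE rx ry. Qed.

Lemma dist_pos_ne (x : config) (y : config) : #|` x| = #|` y| -> x != y -> (0 < dist x y)%N.
Proof. by move=> h; rewrite (eq_cfg3 h) lt0n. Qed.

Lemma tri (z : config) (x : config) (y : config) (r : page) : #|` z| = #|` x| -> #|` x| = #|` y| ->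
  (costc z r y <= dist z x + cost x r y)%N.
Proof.
move=> hzx hxy; rewrite -cost_costc; last by rewrite hzx.
rewrite !costE.
have T := dist_tri z x y.
have [exy|nxy] := eqVneq x y.
  subst y; have -> : dist x x = 0%N by rewrite /dist fsetDv cardfs0.
  have [->|nzx] := eqVneq z x; first (case: (r \in x); rewrite /=; lia).
  by case: (r \in z); case: (r \in x); rewrite /=; lia.
have [ezy|nzy] := eqVneq z y.
  subst z; have -> : dist y y = 0%N by rewrite /dist fsetDv cardfs0.
  rewrite (dist_sym hzx).
  have P := dist_pos_ne hxy nxy.
  by case: (r \in x); case: (r \in y); rewrite /= ; lia.
case rx: (r \in x); case ry: (r \in y); case rz: (r \in z); rewrite /= ?addn0 //; try lia.
have := dist_tri_r (negbT rz) rx (negbT ry); lia.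
Qed.


End FsetLemmas.

Section Coupling.
Variable R : realType.

Lemma dcost_le (p : distr R) r (p' : distr R) (gamma : config -> config -> R) :
  (forall x y, 0 <= gamma x y) ->
  (forall x, x \in supp p -> \sum_(y <- supp p') gamma x y = pmf p x) ->
  (forall y, y \in supp p' -> \sum_(x <- supp p) gamma x y = pmf p' y) ->
  dcost p r p' <= \sum_(x <- supp p) \sum_(y <- supp p') gamma x y * (cost x r y)%:R.
Proof.
move=> g0 hr hc; rewrite /dcost; apply: ge_inf; last by exists gamma; split.
exists 0 => c [g [gp _ _ ->]].
by apply: sumr_ge0 => x _; apply: sumr_ge0 => y _; apply: mulr_ge0.
Qed.

Lemma sum_pick (s : seq config) v (F : config -> R) : uniq s -> v \in s ->
  \sum_(y <- s) (v == y)%:R * F y = F v.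
Proof.
move=> u vs; rewrite (bigD1_seq v) //= eqxx mul1r big1 ?addr0 // => y.
by rewrite eq_sym => /negbTE ->; rewrite mul0r.
Qed.

Definition mkd (D : nat) (P : seq (nat * config)) : distr R :=
  [seq ((q.1)%:R / D%:R, q.2) | q <- P].

End Coupling.

Definition nthc (P : seq (nat * config)) i := (nth (0%N, fset0) P i).2.

Lemma ifadd (c : bool) (a b : nat) : (if c then a + b else b)%N = (c * a + b)%N.
Proof. by case: c => //=; rewrite mul1n. Qed.

Lemma sum_rows (tau : seq (nat * nat * nat)) (proj : nat * nat * nat -> nat) (n : nat) (g : pred nat) :
  all (fun t => proj t < n)%N tau ->
  (\sum_(t <- tau | g (proj t)) t.2 =
   \sum_(i <- iota 0 n | g i) \sum_(t <- tau | proj t == i) t.2)%N.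
Proof.
elim: tau => [|t tau IH] /=.
  by rewrite big_nil big1 // => i _; rewrite big_nil.
move=> /andP [ht hall]; rewrite big_cons IH // ifadd.
under [X in _ = X]eq_bigr => i _ do rewrite big_cons ifadd.
rewrite big_split /=; congr (_ + _)%N.
rewrite -big_filter.
case gt: (g (proj t)).
  rewrite (bigD1_seq (proj t)) /=; last by rewrite filter_uniq ?iota_uniq.
    rewrite eqxx big1 ?addn0 // => i; rewrite eq_sym => /negbTE -> //.
  by rewrite mem_filter gt mem_iota /= add0n ht.
rewrite big_seq big1 // => i; rewrite mem_filter => /andP [gi _].
by case: eqP => // e; move: gt; rewrite e gi.
Qed.

Lemma marg (tau : seq (nat * nat * nat)) (P : seq (nat * config)) (proj : nat * nat * nat -> nat) x :
  all (fun t => proj t < size P)%N tau ->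
  [seq sumn [seq t.2 | t <- tau & proj t == i] | i <- iota 0 (size P)] = map fst P ->
  (\sum_(t <- tau | nthc P (proj t) == x) t.2 = \sum_(q <- P | q.2 == x) q.1)%N.
Proof.
move=> hall hrow.
rewrite (@sum_rows tau proj (size P) (fun i => nthc P i == x) hall).
rewrite (big_nth (0%N, fset0)) /index_iota subn0 big_seq_cond [RHS]big_seq_cond.
apply: eq_bigr => i /andP [hi _].
have := congr1 (nth 0%N ^~ i) hrow.
rewrite (nth_map 0%N) ?size_iota; last by move: hi; rewrite mem_iota.
rewrite (nth_map (0%N, fset0)); last by move: hi; rewrite mem_iota.
rewrite nth_iota; last by move: hi; rewrite mem_iota.
by rewrite add0n sumnE big_map big_filter.
Qed.

Section C2.
Variable R : realType.

Lemma pmf_mkd D P x : pmf (mkd R D P) x = (\sum_(q <- P | q.2 == x) q.1)%:R / D%:R.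
Proof. by rewrite /pmf /mkd big_map /= natr_sum mulr_suml. Qed.

Lemma pos_sum (P : seq (nat * config)) x : all (fun q => 0 < q.1)%N P -> x \in map snd P ->
  (0 < \sum_(q <- P | q.2 == x) q.1)%N.
Proof.
elim: P => [|q P IH] //= /andP [q0 hall]; rewrite inE big_cons.
case: eqP => [<-|_] /=; first by rewrite eqxx addn_gt0 q0.
case: (q.2 == x) => /=; last exact: IH.
by rewrite addn_gt0 q0.
Qed.

Lemma mem_supp D P x : (0 < D)%N -> all (fun q => 0 < q.1)%N P -> x \in map snd P ->
  x \in supp (mkd R D P).
Proof.
move=> D0 hall hx; rewrite /supp mem_filter mem_undup.
have -> : map snd (mkd R D P) = map snd P by rewrite /mkd -map_comp.
rewrite hx andbT pmf_mkd divr_gt0 // ltr0n //; exact: pos_sum.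
Qed.

Lemma uniq_supp (p : distr R) : uniq (supp p).
Proof. by rewrite /supp filter_uniq ?undup_uniq. Qed.

Lemma nthc_mem (P : seq (nat * config)) i : (i < size P)%N -> nthc P i \in map snd P.
Proof. by move=> hi; rewrite /nthc -(nth_map _ fset0) ?mem_nth ?size_map. Qed.

Lemma rowR (tau : seq (nat * nat * nat)) (P : seq (nat * config)) (proj : nat * nat * nat -> nat) D x :
  all (fun t => proj t < size P)%N tau ->
  [seq sumn [seq t.2 | t <- tau & proj t == i] | i <- iota 0 (size P)] = map fst P ->
  \sum_(t <- tau) (nthc P (proj t) == x)%:R * ((t.2)%:R / D%:R) = pmf (mkd R D P) x :> R.
Proof.
move=> hall hrow; rewrite pmf_mkd -(marg x hall hrow) natr_sum mulr_suml.
rewrite [RHS]big_mkcond /=; apply: eq_bigr => t _.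
by case: (_ == x); rewrite ?mul1r ?mul0r.
Qed.

Lemma dcost_tau (D : nat) (P P' : seq (nat * config)) (tau : seq (nat * nat * nat)) r :
  (0 < D)%N ->
  all (fun q => 0 < q.1)%N P -> all (fun q => 0 < q.1)%N P' ->
  all (fun t => (t.1.1 < size P) && (t.1.2 < size P'))%N tau ->
  [seq sumn [seq t.2 | t <- tau & t.1.1 == i] | i <- iota 0 (size P)] = map fst P ->
  [seq sumn [seq t.2 | t <- tau & t.1.2 == j] | j <- iota 0 (size P')] = map fst P' ->
  dcost (mkd R D P) r (mkd R D P') <=
    (sumn [seq t.2 * cost (nthc P t.1.1) r (nthc P' t.1.2) | t <- tau])%:R / D%:R.
Proof.
move=> D0 hP hP' hall hrow hcol.
have hall1 : all (fun t => t.1.1 < size P)%N tau.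
  by apply: sub_all hall => t /andP [].
have hall2 : all (fun t => t.1.2 < size P')%N tau.
  by apply: sub_all hall => t /andP [].
have inS1 t : t \in tau -> nthc P t.1.1 \in supp (mkd R D P).
  by move=> ht; apply: mem_supp => //; apply: nthc_mem; move/allP: hall1; apply.
have inS2 t : t \in tau -> nthc P' t.1.2 \in supp (mkd R D P').
  by move=> ht; apply: mem_supp => //; apply: nthc_mem; move/allP: hall2; apply.
set c := fun t : nat * nat * nat => (t.2)%:R / D%:R : R.
pose gamma x y := \sum_(t <- tau) (nthc P t.1.1 == x)%:R * ((nthc P' t.1.2 == y)%:R * c t).
have c0 t : 0 <= c t by rewrite /c divr_ge0.
apply: le_trans (@dcost_le R (mkd R D P) r (mkd R D P') gamma _ _ _) _.
- move=> x y; apply: sumr_ge0 => t _; apply: mulr_ge0 => //; apply: mulr_ge0 => //.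
- move=> x _; rewrite /gamma exchange_big /= -(@rowR tau P (fun t => t.1.1) D x hall1 hrow).
  rewrite big_seq_cond [RHS]big_seq_cond; apply: eq_bigr => t /andP [ht _].
  by rewrite -big_distrr /= (sum_pick (fun=> c t)) ?uniq_supp ?inS2.
- move=> y _; rewrite /gamma exchange_big /= -(@rowR tau P' (fun t => t.1.2) D y hall2 hcol).
  rewrite big_seq_cond [RHS]big_seq_cond; apply: eq_bigr => t /andP [ht _].
  under eq_bigr => x _ do rewrite mulrCA.
  by rewrite -big_distrr /= (sum_pick (fun=> c t)) ?uniq_supp ?inS1.
rewrite le_eqVlt; apply/orP; left; apply/eqP.
rewrite /gamma.
under eq_bigr => x _ do under eq_bigr => y _ do rewrite mulr_suml.
under eq_bigr => x _ do rewrite exchange_big /=.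
rewrite exchange_big /= sumnE big_map natr_sum mulr_suml.
rewrite big_seq_cond [RHS]big_seq_cond; apply: eq_bigr => t /andP [ht _].
under eq_bigr => x _ do under eq_bigr => y _ do rewrite -mulrA -(mulrA _ (c t)).
under eq_bigr => x _ do rewrite -big_distrr /=.
under eq_bigr => x _ do rewrite (sum_pick (fun y => c t * (cost x r y)%:R)) ?uniq_supp ?inS2 //.
rewrite (sum_pick (fun x => c t * (cost x r (nthc P' t.1.2))%:R)) ?uniq_supp ?inS1 //.
by rewrite /c natrM mulrAC.
Qed.

End C2.


Definition pages (s : kstate) : seq nat :=
  match s with
  | SA a b c => [:: a; b; c]
  | SB a b c d | SC a b c d => [:: a; b; c; d]
  | SD a b c d e | SE a b c d e | SF a b c d e => [:: a; b; c; d; e]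
  end.
Definition wf s := uniq (pages s).

Definition Sh (s : kstate) : config :=
  match s with
  | SA a b c => c3 a b c
  | SB a b c d | SC a b c d => c3 a b c
  | SD a b c d e | SE a b c d e | SF a b c d e => c3 a b c
  end.
Definition St (s : kstate) : seq config :=
  match s with
  | SA a b c => [::]
  | SB a b c d => [:: c3 a b d; c3 a c d]
  | SC a b c d => [:: c3 a b d]
  | SD a b c d e => [:: c3 a b d; c3 a b e; c3 a c d; c3 a c e; c3 a d e]
  | SE a b c d e => [:: c3 a b d; c3 a b e]
  | SF a b c d e => [:: c3 a b d; c3 a b e; c3 a c d; c3 a c e]
  end.
Definition hval (s : kstate) : nat :=
  match s with
  | SA _ _ _ => 0 | SB _ _ _ _ => 10 | SC _ _ _ _ => 6
  | SD _ _ _ _ _ => 18 | SE _ _ _ _ _ => 12 | SF _ _ _ _ _ => 15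
  end.

Definition minl (f : config -> nat) (z0 : config) (l : seq config) : nat :=
  foldr (fun z m => minn (f z) m) (f z0) l.

Lemma minl_ex f z0 l : exists2 z, z \in z0 :: l & minl f z0 l = f z.
Proof.
elim: l => [|z l [w hw e]] /=; first by exists z0; rewrite ?mem_head.
rewrite /minl /= -/(minl f z0 l) e /minn; case: ltnP => _.
  by exists z => //; rewrite inE mem_head orbT.
exists w => //; move: hw; rewrite !inE => /orP [->|->]; by rewrite ?orbT.
Qed.

Lemma minl_le f z0 l z : z \in z0 :: l -> (minl f z0 l <= f z)%N.
Proof.
elim: l => [|w l IH] /=; first by rewrite inE => /eqP ->.
rewrite /minl /= -/(minl f z0 l) !inE => /or3P [hz|hz|hz].
- by rewrite geq_min IH ?orbT // inE hz.
- by rewrite geq_min (eqP hz) leqnn.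
- by rewrite geq_min IH ?orbT // inE hz orbT.
Qed.

Definition omega s y := minl (fun z => dist z y) (Sh s) (St s).
Definition ocost s r y := minl (fun z => costc z r y) (Sh s) (St s).
Definition Phi {R : realType} s y : R := 11/6 * ((omega s y)%:R + (hval s)%:R / 22).

Lemma card_c3 u v w : uniq [:: u; v; w] -> #|` c3 u v w| = 3%N.
Proof.
move=> h; have := dist_c3 u v w fset0; rewrite /dist fsetD0 => ->.
move: h; rewrite /= !inE !negb_or => /andP [/andP [uv uw] /andP [vw _]].
by rewrite eq_sym (negbTE uv) eq_sym (negbTE uw) eq_sym (negbTE vw).
Qed.

Lemma neq_false_sym (T : eqType) (x y : T) : x != y -> (y == x) = false.
Proof. by rewrite eq_sym => /negbTE. Qed.

Ltac explode := repeat match goal with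
 | H : is_true (_ && _) |- _ => case/andP: H => ? ?
 end.
Ltac mkneq := repeat match goal with
 | H : is_true (?x != ?y) |- _ =>
   let E1 := fresh "E" in let E2 := fresh "E" in
   have E1 := negbTE H;
   have E2 := neq_false_sym H;
   clear H
 end.
Ltac simp_neq := repeat match goal with
 | E : (_ == _) = false |- _ => progress rewrite ?E
 end.
Ltac distinct H := move: H; rewrite /wf /= ?inE ?negb_or => H; explode; mkneq.
Ltac bsimpl := rewrite /= ?inE; simp_neq; rewrite ?eqxx /=; try done.

Lemma Sl_size s : wf s -> all (fun z : config => #|` z| == 3%N) (Sh s :: St s).
Proof.
case: s => [a b c|a b c d|a b c d|a b c d e|a b c d e|a b c d e] /= h;
  distinct h; rewrite !card_c3 //; bsimpl.
Qed.

Lemma omega_cost s x r y : wf s -> #|` x| = 3%N -> #|` y| = 3%N ->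
  (ocost s r y <= omega s x + cost x r y)%N.
Proof.
move=> ws hx hy; rewrite /omega /ocost; have [z hz ->] := minl_ex (fun z => dist z x) (Sh s) (St s).
apply: leq_trans (minl_le _ hz) _.
have hz3 : #|` z| = 3%N.
  by apply/eqP; exact: (allP (Sl_size ws) z hz).
by apply: tri; rewrite ?hz3 ?hx ?hy.
Qed.


Lemma cnt3 (y : config) (s : seq nat) : uniq s -> #|` y| = 3%N ->
  (count (fun q => q \in y) s <= 3)%N.
Proof.
move=> us hy; rewrite -size_filter -hy; apply: uniq_leq_size.
  by rewrite filter_uniq.
by move=> q; rewrite mem_filter => /andP [].
Qed.

Section Gen.
Variable R : realType.

Definition good (s : kstate) (r : page) : Prop :=
  [/\ all (fun p => wf p.2) (@ktrans R s r),
      \sum_(p <- @ktrans R s r) p.1 = 1,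
      all (fun p => 0 <= p.1) (@ktrans R s r) &
      forall y, #|` y| = 3%N ->
        @kstep_cost R s r + \sum_(p <- @ktrans R s r) p.1 * Phi p.2 y <=
        11/6 * ((ocost s r y)%:R + (hval s)%:R / 22)].

Lemma sum_Phi (l : seq (R * kstate)) (ms : seq nat) y :
  map fst l = [seq m%:R / 60%:R | m <- ms] ->
  \sum_(p <- l) p.1 * Phi p.2 y =
  (sumn [seq q.1 * (22 * omega q.2 y + hval q.2) | q <- zip ms (map snd l)])%:R / 720%:R.
Proof.
elim: l ms => [|p l IH] [|m ms] //=; first by rewrite big_nil mul0r.
case=> e1 e2; rewrite big_cons (IH ms) // e1 natrD mulrDl; congr (_ + _).
rewrite /Phi !natrM natrD natrM; by field.
Qed.

Lemma wts (l : seq (R * kstate)) (ms : seq nat) :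
  map fst l = [seq m%:R / 60%:R | m <- ms] -> sumn ms = 60%N ->
  \sum_(p <- l) p.1 = 1 /\ all (fun p => 0 <= p.1) l.
Proof.
move=> e s60; split.
  have -> : \sum_(p <- l) p.1 = \sum_(x <- map fst l) x by rewrite big_map.
  rewrite e big_map -mulr_suml -natr_sum -sumnE s60; by field.
elim: l ms e {s60} => [|p l IH] [|m ms] //= [e1 e2].
by rewrite (IH ms) // e1 divr_ge0.
Qed.

Lemma nat_ineq_R (K S oc h : nat) :
  (6 * K + S <= 60 * (22 * oc + h))%N ->
  K%:R / 120%:R + S%:R / 720%:R <= 11/6 * (oc%:R + h%:R / 22) :> R.
Proof.
rewrite -(ler_nat R) (natrD _ (6 * K)) (natrM _ 6 K) (natrM _ 60) (natrD _ (22 * oc)) (natrM _ 22 oc).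
move=> H; lra.
Qed.

Lemma good_intro s r (l : seq (R * kstate)) (ms : seq nat) (K : nat) :
  @ktrans R s r = l ->
  all (fun p => wf p.2) l ->
  map fst l = [seq m%:R / 60%:R | m <- ms] ->
  sumn ms = 60%N ->
  dcost (@kdist R s) r (mixture l) <= K%:R / 120%:R ->
  (forall y, #|` y| = 3%N ->
     (6 * K + sumn [seq q.1 * (22 * omega q.2 y + hval q.2) | q <- zip ms (map snd l)]
       <= 60 * (22 * ocost s r y + hval s))%N) ->
  good s r.
Proof.
move=> el hwf hm hs hK hN; have [w1 w2] := wts hm hs.
rewrite /good /kstep_cost el; split => // y hy.
rewrite (sum_Phi y hm).
apply: le_trans (lerD hK (lexx _)) _.
exact: nat_ineq_R (hN y hy).
Qed.

Lemma mkd_eq (p : distr R) D P : map snd p = map snd P ->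
  map fst p = [seq (q.1)%:R / D%:R | q <- P] -> p = mkd R D P.
Proof.
elim: p P => [|[w x] p IH] [|[m z] P] //= [e1 e2] [e3 e4].
by rewrite e1 e3 (IH P).
Qed.

Lemma dcost_tau' (D : nat) (P P' : seq (nat * config)) (tau : seq (nat * nat * nat)) r K :
  (0 < D)%N ->
  all (fun q => 0 < q.1)%N P -> all (fun q => 0 < q.1)%N P' ->
  all (fun t => (t.1.1 < size P) && (t.1.2 < size P'))%N tau ->
  [seq sumn [seq t.2 | t <- tau & t.1.1 == i] | i <- iota 0 (size P)] = map fst P ->
  [seq sumn [seq t.2 | t <- tau & t.1.2 == j] | j <- iota 0 (size P')] = map fst P' ->
  (sumn [seq t.2 * cost (nthc P t.1.1) r (nthc P' t.1.2) | t <- tau] <= K)%N ->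
  dcost (mkd R D P) r (mkd R D P') <= K%:R / D%:R.
Proof.
move=> D0 h1 h2 h3 h4 h5 h6; apply: le_trans (@dcost_tau R D P P' tau r D0 h1 h2 h3 h4 h5) _.
by rewrite ler_pM2r ?invr_gt0 ?ltr0n // ler_nat.
Qed.

End Gen.

Lemma cons_eqR (R : realType) (a b : R) l1 l2 : a = b -> l1 = l2 -> a :: l1 = b :: l2.
Proof. by move=> -> ->. Qed.


Section Main.
Variable R : realType.
Hypothesis hgood : forall s r, wf s -> good R s r.

Lemma sum_le_all (l : seq (R * kstate)) (F G : kstate -> R) :
  all (fun p => wf p.2) l -> all (fun p => 0 <= p.1) l ->
  (forall s, wf s -> F s <= G s) ->
  \sum_(p <- l) p.1 * F p.2 <= \sum_(p <- l) p.1 * G p.2.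
Proof.
move=> + + hFG; elim: l => [|p l IH] /=; first by rewrite !big_nil.
move=> /andP [w1 w2] /andP [n1 n2]; rewrite !big_cons.
by apply: lerD; [apply: ler_wpM2l => //; apply: hFG|apply: IH].
Qed.

Lemma Phi_ge0 s y : 0 <= Phi s y :> R.
Proof. by rewrite /Phi; have := ler0n R (omega s y); have := ler0n R (hval s); lra. Qed.

Lemma main_ind rho : forall s x xs, wf s -> #|` x| = 3%N -> size xs = size rho ->
  all is_config xs ->
  @kexp_cost R s rho <= Phi s x + 11/6 * (pathcost x rho xs)%:R.
Proof.
elim: rho => [|r rho IH] s x [|y xs] //= ws hx hsz.
  by rewrite mulr0 addr0 Phi_ge0.
move=> /andP [/eqP hy hall].
have [hw hsum hnn hineq] := hgood r ws.
have hsz' : size xs = size rho by case: hsz.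
have H1 : \sum_(p <- @ktrans R s r) p.1 * kexp_cost p.2 rho <=
          \sum_(p <- @ktrans R s r) p.1 * (Phi p.2 y + 11/6 * (pathcost y rho xs)%:R).
  apply: (@sum_le_all _ (fun s' => @kexp_cost R s' rho) (fun s' => Phi s' y + 11/6 * (pathcost y rho xs)%:R) hw hnn) => s' ws'.
  exact: IH.
have H2 : \sum_(p <- @ktrans R s r) p.1 * (Phi p.2 y + 11/6 * (pathcost y rho xs)%:R) =
          \sum_(p <- @ktrans R s r) p.1 * Phi p.2 y + 11/6 * (pathcost y rho xs)%:R.
  under eq_bigr => p _ do rewrite mulrDr.
  by rewrite big_split /= -big_distrl /= hsum mul1r.
have H3 := hineq y hy.
have H4 : ((ocost s r y)%:R <= (omega s x)%:R + (cost x r y)%:R :> R).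
  by rewrite -natrD ler_nat omega_cost.
rewrite natrD /Phi.
move: H1; rewrite H2 => H1.
move: H1 H3 H4.
set A := \sum_(p <- _) p.1 * kexp_cost _ _.
set B := \sum_(p <- _) p.1 * Phi _ _.
move=> H1 H3 H4.
lra.
Qed.

End Main.

Lemma final (R : realType) (a b c : nat) :
  (forall s r, wf s -> good R s r) -> uniq [:: a; b; c] ->
  exists K : R, forall rho : seq nat,
    kexp_cost (SA a b c) rho <= 11 / 6 * cost_opt (c3 a b c) rho + K.
Proof.
move=> hg u; exists 0 => rho; rewrite addr0.
have h3 : #|` c3 a b c| = 3%N := card_c3 u.
have Phi0 : Phi (SA a b c) (c3 a b c) = 0 :> R.
  by rewrite /Phi /omega /minl /= /dist fsetDv cardfs0 /= mul0r addr0 mulr0.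
have key : forall xs, size xs = size rho -> all is_config xs ->
    kexp_cost (SA a b c) rho <= 11/6 * (pathcost (c3 a b c) rho xs)%:R :> R.
  move=> xs s1 s2; have := @main_ind R hg rho (SA a b c) (c3 a b c) xs u h3 s1 s2.
  by rewrite Phi0 add0r.
rewrite /cost_opt.
set E := (X in inf X).
have : kexp_cost (SA a b c) rho * (6/11) <= inf E.
  apply: lb_le_inf.
    exists (pathcost (c3 a b c) rho (nseq (size rho) (c3 a b c)))%:R.
    exists (nseq (size rho) (c3 a b c)); split => //; first by rewrite size_nseq.
    by rewrite all_nseq /is_config h3 orbT.
  move=> c0 [xs [s1 s2 ->]]; have := key xs s1 s2; lra.
lra.
Qed.


Lemma caseA0 (R : realType) (a b c : nat) :
  uniq [:: a; b; c] -> good R (SA a b c) a.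
Proof.
move=> h0; have h := h0; distinct h.
apply: (@good_intro R (SA a b c) a ([:: (1, SA a b c)] : seq (R * kstate)) [:: 60] 0).
- by bsimpl.
- by rewrite /wf; bsimpl.
- rewrite /=; repeat (apply: cons_eqR; first lra); by [].
- by [].
- rewrite (_ : kdist _ = mkd R 120 [:: (120, c3 a b c)]); last first.
    apply: mkd_eq => //=; repeat (apply: cons_eqR; first lra); by [].
  rewrite (_ : mixture _ = mkd R 120 [:: (120, c3 a b c)]); last first.
    apply: mkd_eq => //=; repeat (apply: cons_eqR; first lra); by [].
  apply: (@dcost_tau' R 120 _ _ [:: (0, 0, 120)]) => //.
  rewrite /nthc /= !costE !eq_cfg !dist_c3 !in_c3; bsimpl.
- move=> y hy; rewrite /omega /ocost /minl /costc /= !dist_c3 !in_c3; bsimpl.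
  move: (cnt3 h0 hy) => /=.
  by move: (a \in y) (b \in y) (c \in y) => [] [] [].
Qed.

Lemma caseA1 (R : realType) (a b c : nat) :
  uniq [:: a; b; c] -> good R (SA a b c) b.
Proof.
move=> h0; have h := h0; distinct h.
apply: (@good_intro R (SA a b c) b ([:: (1, SA a b c)] : seq (R * kstate)) [:: 60] 0).
- by bsimpl.
- by rewrite /wf; bsimpl.
- rewrite /=; repeat (apply: cons_eqR; first lra); by [].
- by [].
- rewrite (_ : kdist _ = mkd R 120 [:: (120, c3 a b c)]); last first.
    apply: mkd_eq => //=; repeat (apply: cons_eqR; first lra); by [].
  rewrite (_ : mixture _ = mkd R 120 [:: (120, c3 a b c)]); last first.
    apply: mkd_eq => //=; repeat (apply: cons_eqR; first lra); by [].
  apply: (@dcost_tau' R 120 _ _ [:: (0, 0, 120)]) => //.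
  rewrite /nthc /= !costE !eq_cfg !dist_c3 !in_c3; bsimpl.
- move=> y hy; rewrite /omega /ocost /minl /costc /= !dist_c3 !in_c3; bsimpl.
  move: (cnt3 h0 hy) => /=.
  by move: (a \in y) (b \in y) (c \in y) => [] [] [].
Qed.

Lemma caseA2 (R : realType) (a b c : nat) :
  uniq [:: a; b; c] -> good R (SA a b c) c.
Proof.
move=> h0; have h := h0; distinct h.
apply: (@good_intro R (SA a b c) c ([:: (1, SA a b c)] : seq (R * kstate)) [:: 60] 0).
- by bsimpl.
- by rewrite /wf; bsimpl.
- rewrite /=; repeat (apply: cons_eqR; first lra); by [].
- by [].
- rewrite (_ : kdist _ = mkd R 120 [:: (120, c3 a b c)]); last first.
    apply: mkd_eq => //=; repeat (apply: cons_eqR; first lra); by [].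
  rewrite (_ : mixture _ = mkd R 120 [:: (120, c3 a b c)]); last first.
    apply: mkd_eq => //=; repeat (apply: cons_eqR; first lra); by [].
  apply: (@dcost_tau' R 120 _ _ [:: (0, 0, 120)]) => //.
  rewrite /nthc /= !costE !eq_cfg !dist_c3 !in_c3; bsimpl.
- move=> y hy; rewrite /omega /ocost /minl /costc /= !dist_c3 !in_c3; bsimpl.
  move: (cnt3 h0 hy) => /=.
  by move: (a \in y) (b \in y) (c \in y) => [] [] [].
Qed.

Lemma caseA3 (R : realType) (a b c r : nat) :
  uniq [:: a; b; c; r] -> good R (SA a b c) r.
Proof.
move=> h0; have h := h0; distinct h.
apply: (@good_intro R (SA a b c) r ([:: (1, SB r a b c)] : seq (R * kstate)) [:: 60] 120).
- by bsimpl.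
- by rewrite /wf; bsimpl.
- rewrite /=; repeat (apply: cons_eqR; first lra); by [].
- by [].
- rewrite (_ : kdist _ = mkd R 120 [:: (120, c3 a b c)]); last first.
    apply: mkd_eq => //=; repeat (apply: cons_eqR; first lra); by [].
  rewrite (_ : mixture _ = mkd R 120 [:: (40, c3 r a b); (40, c3 r a c); (40, c3 r b c)]); last first.
    apply: mkd_eq => //=; repeat (apply: cons_eqR; first lra); by [].
  apply: (@dcost_tau' R 120 _ _ [:: (0, 0, 40); (0, 1, 40); (0, 2, 40)]) => //.
  rewrite /nthc /= !costE !eq_cfg !dist_c3 !in_c3; bsimpl.
- move=> y hy; rewrite /omega /ocost /minl /costc /= !dist_c3 !in_c3; bsimpl.
  move: (cnt3 h0 hy) => /=.
  by move: (a \in y) (b \in y) (c \in y) (r \in y) => [] [] [] [].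
Qed.

Lemma caseB0 (R : realType) (a b c d : nat) :
  uniq [:: a; b; c; d] -> good R (SB a b c d) a.
Proof.
move=> h0; have h := h0; distinct h.
apply: (@good_intro R (SB a b c d) a ([:: (1, SB a b c d)] : seq (R * kstate)) [:: 60] 0).
- by bsimpl.
- by rewrite /wf; bsimpl.
- rewrite /=; repeat (apply: cons_eqR; first lra); by [].
- by [].
- rewrite (_ : kdist _ = mkd R 120 [:: (40, c3 a b c); (40, c3 a b d); (40, c3 a c d)]); last first.
    apply: mkd_eq => //=; repeat (apply: cons_eqR; first lra); by [].
  rewrite (_ : mixture _ = mkd R 120 [:: (40, c3 a b c); (40, c3 a b d); (40, c3 a c d)]); last first.
    apply: mkd_eq => //=; repeat (apply: cons_eqR; first lra); by [].
  apply: (@dcost_tau' R 120 _ _ [:: (0, 0, 40); (1, 1, 40); (2, 2, 40)]) => //.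
  rewrite /nthc /= !costE !eq_cfg !dist_c3 !in_c3; bsimpl.
- move=> y hy; rewrite /omega /ocost /minl /costc /= !dist_c3 !in_c3; bsimpl.
  move: (cnt3 h0 hy) => /=.
  by move: (a \in y) (b \in y) (c \in y) (d \in y) => [] [] [] [].
Qed.

Lemma caseB1 (R : realType) (a b c d : nat) :
  uniq [:: a; b; c; d] -> good R (SB a b c d) b.
Proof.
move=> h0; have h := h0; distinct h.
apply: (@good_intro R (SB a b c d) b ([:: (1, SC a b c d)] : seq (R * kstate)) [:: 60] 40).
- by bsimpl.
- by rewrite /wf; bsimpl.
- rewrite /=; repeat (apply: cons_eqR; first lra); by [].
- by [].
- rewrite (_ : kdist _ = mkd R 120 [:: (40, c3 a b c); (40, c3 a b d); (40, c3 a c d)]); last first.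
    apply: mkd_eq => //=; repeat (apply: cons_eqR; first lra); by [].
  rewrite (_ : mixture _ = mkd R 120 [:: (60, c3 a b c); (60, c3 a b d)]); last first.
    apply: mkd_eq => //=; repeat (apply: cons_eqR; first lra); by [].
  apply: (@dcost_tau' R 120 _ _ [:: (0, 0, 40); (1, 1, 40); (2, 0, 20); (2, 1, 20)]) => //.
  rewrite /nthc /= !costE !eq_cfg !dist_c3 !in_c3; bsimpl.
- move=> y hy; rewrite /omega /ocost /minl /costc /= !dist_c3 !in_c3; bsimpl.
  move: (cnt3 h0 hy) => /=.
  by move: (a \in y) (b \in y) (c \in y) (d \in y) => [] [] [] [].
Qed.

Lemma caseB2 (R : realType) (a b c d : nat) :
  uniq [:: a; b; c; d] -> good R (SB a b c d) c.
Proof.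
move=> h0; have h := h0; distinct h.
apply: (@good_intro R (SB a b c d) c ([:: (1, SC a c b d)] : seq (R * kstate)) [:: 60] 40).
- by bsimpl.
- by rewrite /wf; bsimpl.
- rewrite /=; repeat (apply: cons_eqR; first lra); by [].
- by [].
- rewrite (_ : kdist _ = mkd R 120 [:: (40, c3 a b c); (40, c3 a b d); (40, c3 a c d)]); last first.
    apply: mkd_eq => //=; repeat (apply: cons_eqR; first lra); by [].
  rewrite (_ : mixture _ = mkd R 120 [:: (60, c3 a c b); (60, c3 a c d)]); last first.
    apply: mkd_eq => //=; repeat (apply: cons_eqR; first lra); by [].
  apply: (@dcost_tau' R 120 _ _ [:: (0, 0, 40); (1, 0, 20); (1, 1, 20); (2, 1, 40)]) => //.
  rewrite /nthc /= !costE !eq_cfg !dist_c3 !in_c3; bsimpl.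
- move=> y hy; rewrite /omega /ocost /minl /costc /= !dist_c3 !in_c3; bsimpl.
  move: (cnt3 h0 hy) => /=.
  by move: (a \in y) (b \in y) (c \in y) (d \in y) => [] [] [] [].
Qed.

Lemma caseB3 (R : realType) (a b c d : nat) :
  uniq [:: a; b; c; d] -> good R (SB a b c d) d.
Proof.
move=> h0; have h := h0; distinct h.
apply: (@good_intro R (SB a b c d) d ([:: (1, SC a d b c)] : seq (R * kstate)) [:: 60] 40).
- by bsimpl.
- by rewrite /wf; bsimpl.
- rewrite /=; repeat (apply: cons_eqR; first lra); by [].
- by [].
- rewrite (_ : kdist _ = mkd R 120 [:: (40, c3 a b c); (40, c3 a b d); (40, c3 a c d)]); last first.
    apply: mkd_eq => //=; repeat (apply: cons_eqR; first lra); by [].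
  rewrite (_ : mixture _ = mkd R 120 [:: (60, c3 a d b); (60, c3 a d c)]); last first.
    apply: mkd_eq => //=; repeat (apply: cons_eqR; first lra); by [].
  apply: (@dcost_tau' R 120 _ _ [:: (0, 0, 20); (0, 1, 20); (1, 0, 40); (2, 1, 40)]) => //.
  rewrite /nthc /= !costE !eq_cfg !dist_c3 !in_c3; bsimpl.
- move=> y hy; rewrite /omega /ocost /minl /costc /= !dist_c3 !in_c3; bsimpl.
  move: (cnt3 h0 hy) => /=.
  by move: (a \in y) (b \in y) (c \in y) (d \in y) => [] [] [] [].
Qed.

Lemma caseB4 (R : realType) (a b c d r : nat) :
  uniq [:: a; b; c; d; r] -> good R (SB a b c d) r.
Proof.
move=> h0; have h := h0; distinct h.
apply: (@good_intro R (SB a b c d) r ([:: (1, SD r a b c d)] : seq (R * kstate)) [:: 60] 120).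
- by bsimpl.
- by rewrite /wf; bsimpl.
- rewrite /=; repeat (apply: cons_eqR; first lra); by [].
- by [].
- rewrite (_ : kdist _ = mkd R 120 [:: (40, c3 a b c); (40, c3 a b d); (40, c3 a c d)]); last first.
    apply: mkd_eq => //=; repeat (apply: cons_eqR; first lra); by [].
  rewrite (_ : mixture _ = mkd R 120 [:: (20, c3 r a b); (20, c3 r a c); (20, c3 r a d); (20, c3 r b c); (20, c3 r b d); (20, c3 r c d)]); last first.
    apply: mkd_eq => //=; repeat (apply: cons_eqR; first lra); by [].
  apply: (@dcost_tau' R 120 _ _ [:: (0, 1, 20); (0, 3, 20); (1, 0, 20); (1, 4, 20); (2, 2, 20); (2, 5, 20)]) => //.
  rewrite /nthc /= !costE !eq_cfg !dist_c3 !in_c3; bsimpl.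
- move=> y hy; rewrite /omega /ocost /minl /costc /= !dist_c3 !in_c3; bsimpl.
  move: (cnt3 h0 hy) => /=.
  by move: (a \in y) (b \in y) (c \in y) (d \in y) (r \in y) => [] [] [] [] [].
Qed.

Lemma caseC0 (R : realType) (a b c d : nat) :
  uniq [:: a; b; c; d] -> good R (SC a b c d) a.
Proof.
move=> h0; have h := h0; distinct h.
apply: (@good_intro R (SC a b c d) a ([:: (1, SC a b c d)] : seq (R * kstate)) [:: 60] 0).
- by bsimpl.
- by rewrite /wf; bsimpl.
- rewrite /=; repeat (apply: cons_eqR; first lra); by [].
- by [].
- rewrite (_ : kdist _ = mkd R 120 [:: (60, c3 a b c); (60, c3 a b d)]); last first.
    apply: mkd_eq => //=; repeat (apply: cons_eqR; first lra); by [].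
  rewrite (_ : mixture _ = mkd R 120 [:: (60, c3 a b c); (60, c3 a b d)]); last first.
    apply: mkd_eq => //=; repeat (apply: cons_eqR; first lra); by [].
  apply: (@dcost_tau' R 120 _ _ [:: (0, 0, 60); (1, 1, 60)]) => //.
  rewrite /nthc /= !costE !eq_cfg !dist_c3 !in_c3; bsimpl.
- move=> y hy; rewrite /omega /ocost /minl /costc /= !dist_c3 !in_c3; bsimpl.
  move: (cnt3 h0 hy) => /=.
  by move: (a \in y) (b \in y) (c \in y) (d \in y) => [] [] [] [].
Qed.

Lemma caseC1 (R : realType) (a b c d : nat) :
  uniq [:: a; b; c; d] -> good R (SC a b c d) b.
Proof.
move=> h0; have h := h0; distinct h.
apply: (@good_intro R (SC a b c d) b ([:: (1, SC a b c d)] : seq (R * kstate)) [:: 60] 0).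
- by bsimpl.
- by rewrite /wf; bsimpl.
- rewrite /=; repeat (apply: cons_eqR; first lra); by [].
- by [].
- rewrite (_ : kdist _ = mkd R 120 [:: (60, c3 a b c); (60, c3 a b d)]); last first.
    apply: mkd_eq => //=; repeat (apply: cons_eqR; first lra); by [].
  rewrite (_ : mixture _ = mkd R 120 [:: (60, c3 a b c); (60, c3 a b d)]); last first.
    apply: mkd_eq => //=; repeat (apply: cons_eqR; first lra); by [].
  apply: (@dcost_tau' R 120 _ _ [:: (0, 0, 60); (1, 1, 60)]) => //.
  rewrite /nthc /= !costE !eq_cfg !dist_c3 !in_c3; bsimpl.
- move=> y hy; rewrite /omega /ocost /minl /costc /= !dist_c3 !in_c3; bsimpl.
  move: (cnt3 h0 hy) => /=.
  by move: (a \in y) (b \in y) (c \in y) (d \in y) => [] [] [] [].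
Qed.

Lemma caseC2 (R : realType) (a b c d : nat) :
  uniq [:: a; b; c; d] -> good R (SC a b c d) c.
Proof.
move=> h0; have h := h0; distinct h.
apply: (@good_intro R (SC a b c d) c ([:: (1, SA a b c)] : seq (R * kstate)) [:: 60] 60).
- by bsimpl.
- by rewrite /wf; bsimpl.
- rewrite /=; repeat (apply: cons_eqR; first lra); by [].
- by [].
- rewrite (_ : kdist _ = mkd R 120 [:: (60, c3 a b c); (60, c3 a b d)]); last first.
    apply: mkd_eq => //=; repeat (apply: cons_eqR; first lra); by [].
  rewrite (_ : mixture _ = mkd R 120 [:: (120, c3 a b c)]); last first.
    apply: mkd_eq => //=; repeat (apply: cons_eqR; first lra); by [].
  apply: (@dcost_tau' R 120 _ _ [:: (0, 0, 60); (1, 0, 60)]) => //.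
  rewrite /nthc /= !costE !eq_cfg !dist_c3 !in_c3; bsimpl.
- move=> y hy; rewrite /omega /ocost /minl /costc /= !dist_c3 !in_c3; bsimpl.
  move: (cnt3 h0 hy) => /=.
  by move: (a \in y) (b \in y) (c \in y) (d \in y) => [] [] [] [].
Qed.

Lemma caseC3 (R : realType) (a b c d : nat) :
  uniq [:: a; b; c; d] -> good R (SC a b c d) d.
Proof.
move=> h0; have h := h0; distinct h.
apply: (@good_intro R (SC a b c d) d ([:: (1, SA a b d)] : seq (R * kstate)) [:: 60] 60).
- by bsimpl.
- by rewrite /wf; bsimpl.
- rewrite /=; repeat (apply: cons_eqR; first lra); by [].
- by [].
- rewrite (_ : kdist _ = mkd R 120 [:: (60, c3 a b c); (60, c3 a b d)]); last first.
    apply: mkd_eq => //=; repeat (apply: cons_eqR; first lra); by [].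
  rewrite (_ : mixture _ = mkd R 120 [:: (120, c3 a b d)]); last first.
    apply: mkd_eq => //=; repeat (apply: cons_eqR; first lra); by [].
  apply: (@dcost_tau' R 120 _ _ [:: (0, 0, 60); (1, 0, 60)]) => //.
  rewrite /nthc /= !costE !eq_cfg !dist_c3 !in_c3; bsimpl.
- move=> y hy; rewrite /omega /ocost /minl /costc /= !dist_c3 !in_c3; bsimpl.
  move: (cnt3 h0 hy) => /=.
  by move: (a \in y) (b \in y) (c \in y) (d \in y) => [] [] [] [].
Qed.

Lemma caseC4 (R : realType) (a b c d r : nat) :
  uniq [:: a; b; c; d; r] -> good R (SC a b c d) r.
Proof.
move=> h0; have h := h0; distinct h.
apply: (@good_intro R (SC a b c d) r ([:: (1, SF r a b c d)] : seq (R * kstate)) [:: 60] 120).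
- by bsimpl.
- by rewrite /wf; bsimpl.
- rewrite /=; repeat (apply: cons_eqR; first lra); by [].
- by [].
- rewrite (_ : kdist _ = mkd R 120 [:: (60, c3 a b c); (60, c3 a b d)]); last first.
    apply: mkd_eq => //=; repeat (apply: cons_eqR; first lra); by [].
  rewrite (_ : mixture _ = mkd R 120 [:: (60, c3 r a b); (15, c3 r a c); (15, c3 r a d); (15, c3 r b c); (15, c3 r b d)]); last first.
    apply: mkd_eq => //=; repeat (apply: cons_eqR; first lra); by [].
  apply: (@dcost_tau' R 120 _ _ [:: (0, 0, 30); (0, 1, 15); (0, 3, 15); (1, 0, 30); (1, 2, 15); (1, 4, 15)]) => //.
  rewrite /nthc /= !costE !eq_cfg !dist_c3 !in_c3; bsimpl.
- move=> y hy; rewrite /omega /ocost /minl /costc /= !dist_c3 !in_c3; bsimpl.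
  move: (cnt3 h0 hy) => /=.
  by move: (a \in y) (b \in y) (c \in y) (d \in y) (r \in y) => [] [] [] [] [].
Qed.

Lemma caseD0 (R : realType) (a b c d e : nat) :
  uniq [:: a; b; c; d; e] -> good R (SD a b c d e) a.
Proof.
move=> h0; have h := h0; distinct h.
apply: (@good_intro R (SD a b c d e) a ([:: (1, SD a b c d e)] : seq (R * kstate)) [:: 60] 0).
- by bsimpl.
- by rewrite /wf; bsimpl.
- rewrite /=; repeat (apply: cons_eqR; first lra); by [].
- by [].
- rewrite (_ : kdist _ = mkd R 120 [:: (20, c3 a b c); (20, c3 a b d); (20, c3 a b e); (20, c3 a c d); (20, c3 a c e); (20, c3 a d e)]); last first.
    apply: mkd_eq => //=; repeat (apply: cons_eqR; first lra); by [].
  rewrite (_ : mixture _ = mkd R 120 [:: (20, c3 a b c); (20, c3 a b d); (20, c3 a b e); (20, c3 a c d); (20, c3 a c e); (20, c3 a d e)]); last first.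
    apply: mkd_eq => //=; repeat (apply: cons_eqR; first lra); by [].
  apply: (@dcost_tau' R 120 _ _ [:: (0, 0, 20); (1, 1, 20); (2, 2, 20); (3, 3, 20); (4, 4, 20); (5, 5, 20)]) => //.
  rewrite /nthc /= !costE !eq_cfg !dist_c3 !in_c3; bsimpl.
- move=> y hy; rewrite /omega /ocost /minl /costc /= !dist_c3 !in_c3; bsimpl.
  move: (cnt3 h0 hy) => /=.
  by move: (a \in y) (b \in y) (c \in y) (d \in y) (e \in y) => [] [] [] [] [].
Qed.

Lemma caseD1 (R : realType) (a b c d e : nat) :
  uniq [:: a; b; c; d; e] -> good R (SD a b c d e) b.
Proof.
move=> h0; have h := h0; distinct h.
apply: (@good_intro R (SD a b c d e) b ([:: (1, SE a b c d e)] : seq (R * kstate)) [:: 60] 60).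
- by bsimpl.
- by rewrite /wf; bsimpl.
- rewrite /=; repeat (apply: cons_eqR; first lra); by [].
- by [].
- rewrite (_ : kdist _ = mkd R 120 [:: (20, c3 a b c); (20, c3 a b d); (20, c3 a b e); (20, c3 a c d); (20, c3 a c e); (20, c3 a d e)]); last first.
    apply: mkd_eq => //=; repeat (apply: cons_eqR; first lra); by [].
  rewrite (_ : mixture _ = mkd R 120 [:: (60, c3 a b c); (30, c3 a b d); (30, c3 a b e)]); last first.
    apply: mkd_eq => //=; repeat (apply: cons_eqR; first lra); by [].
  apply: (@dcost_tau' R 120 _ _ [:: (0, 0, 20); (1, 1, 20); (2, 2, 20); (3, 0, 20); (4, 0, 20); (5, 1, 10); (5, 2, 10)]) => //.
  rewrite /nthc /= !costE !eq_cfg !dist_c3 !in_c3; bsimpl.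
- move=> y hy; rewrite /omega /ocost /minl /costc /= !dist_c3 !in_c3; bsimpl.
  move: (cnt3 h0 hy) => /=.
  by move: (a \in y) (b \in y) (c \in y) (d \in y) (e \in y) => [] [] [] [] [].
Qed.

Lemma caseD2 (R : realType) (a b c d e : nat) :
  uniq [:: a; b; c; d; e] -> good R (SD a b c d e) c.
Proof.
move=> h0; have h := h0; distinct h.
apply: (@good_intro R (SD a b c d e) c ([:: (1, SE a c b d e)] : seq (R * kstate)) [:: 60] 60).
- by bsimpl.
- by rewrite /wf; bsimpl.
- rewrite /=; repeat (apply: cons_eqR; first lra); by [].
- by [].
- rewrite (_ : kdist _ = mkd R 120 [:: (20, c3 a b c); (20, c3 a b d); (20, c3 a b e); (20, c3 a c d); (20, c3 a c e); (20, c3 a d e)]); last first.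
    apply: mkd_eq => //=; repeat (apply: cons_eqR; first lra); by [].
  rewrite (_ : mixture _ = mkd R 120 [:: (60, c3 a c b); (30, c3 a c d); (30, c3 a c e)]); last first.
    apply: mkd_eq => //=; repeat (apply: cons_eqR; first lra); by [].
  apply: (@dcost_tau' R 120 _ _ [:: (0, 0, 20); (1, 0, 20); (2, 0, 20); (3, 1, 20); (4, 2, 20); (5, 1, 10); (5, 2, 10)]) => //.
  rewrite /nthc /= !costE !eq_cfg !dist_c3 !in_c3; bsimpl.
- move=> y hy; rewrite /omega /ocost /minl /costc /= !dist_c3 !in_c3; bsimpl.
  move: (cnt3 h0 hy) => /=.
  by move: (a \in y) (b \in y) (c \in y) (d \in y) (e \in y) => [] [] [] [] [].
Qed.

Lemma caseD3 (R : realType) (a b c d e : nat) :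
  uniq [:: a; b; c; d; e] -> good R (SD a b c d e) d.
Proof.
move=> h0; have h := h0; distinct h.
apply: (@good_intro R (SD a b c d e) d ([:: (1, SE a d b c e)] : seq (R * kstate)) [:: 60] 60).
- by bsimpl.
- by rewrite /wf; bsimpl.
- rewrite /=; repeat (apply: cons_eqR; first lra); by [].
- by [].
- rewrite (_ : kdist _ = mkd R 120 [:: (20, c3 a b c); (20, c3 a b d); (20, c3 a b e); (20, c3 a c d); (20, c3 a c e); (20, c3 a d e)]); last first.
    apply: mkd_eq => //=; repeat (apply: cons_eqR; first lra); by [].
  rewrite (_ : mixture _ = mkd R 120 [:: (60, c3 a d b); (30, c3 a d c); (30, c3 a d e)]); last first.
    apply: mkd_eq => //=; repeat (apply: cons_eqR; first lra); by [].
  apply: (@dcost_tau' R 120 _ _ [:: (0, 0, 20); (1, 0, 20); (2, 0, 20); (3, 1, 20); (4, 1, 10); (4, 2, 10); (5, 2, 20)]) => //.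
  rewrite /nthc /= !costE !eq_cfg !dist_c3 !in_c3; bsimpl.
- move=> y hy; rewrite /omega /ocost /minl /costc /= !dist_c3 !in_c3; bsimpl.
  move: (cnt3 h0 hy) => /=.
  by move: (a \in y) (b \in y) (c \in y) (d \in y) (e \in y) => [] [] [] [] [].
Qed.

Lemma caseD4 (R : realType) (a b c d e : nat) :
  uniq [:: a; b; c; d; e] -> good R (SD a b c d e) e.
Proof.
move=> h0; have h := h0; distinct h.
apply: (@good_intro R (SD a b c d e) e ([:: (1, SE a e b c d)] : seq (R * kstate)) [:: 60] 60).
- by bsimpl.
- by rewrite /wf; bsimpl.
- rewrite /=; repeat (apply: cons_eqR; first lra); by [].
- by [].
- rewrite (_ : kdist _ = mkd R 120 [:: (20, c3 a b c); (20, c3 a b d); (20, c3 a b e); (20, c3 a c d); (20, c3 a c e); (20, c3 a d e)]); last first.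
    apply: mkd_eq => //=; repeat (apply: cons_eqR; first lra); by [].
  rewrite (_ : mixture _ = mkd R 120 [:: (60, c3 a e b); (30, c3 a e c); (30, c3 a e d)]); last first.
    apply: mkd_eq => //=; repeat (apply: cons_eqR; first lra); by [].
  apply: (@dcost_tau' R 120 _ _ [:: (0, 0, 20); (1, 0, 20); (2, 0, 20); (3, 1, 10); (3, 2, 10); (4, 1, 20); (5, 2, 20)]) => //.
  rewrite /nthc /= !costE !eq_cfg !dist_c3 !in_c3; bsimpl.
- move=> y hy; rewrite /omega /ocost /minl /costc /= !dist_c3 !in_c3; bsimpl.
  move: (cnt3 h0 hy) => /=.
  by move: (a \in y) (b \in y) (c \in y) (d \in y) (e \in y) => [] [] [] [] [].
Qed.

Lemma caseD5 (R : realType) (a b c d e r : nat) :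
  uniq [:: a; b; c; d; e; r] -> good R (SD a b c d e) r.
Proof.
move=> h0; have h := h0; distinct h.
apply: (@good_intro R (SD a b c d e) r ([:: (1/10, SA r a b); (1/10, SA r a c); (1/10, SA r a d); (1/10, SA r a e); (1/10, SA r b c); (1/10, SA r b d); (1/10, SA r b e); (1/10, SA r c d); (1/10, SA r c e); (1/10, SA r d e)] : seq (R * kstate)) [:: 6; 6; 6; 6; 6; 6; 6; 6; 6; 6] 120).
- by bsimpl.
- by rewrite /wf; bsimpl.
- rewrite /=; repeat (apply: cons_eqR; first lra); by [].
- by [].
- rewrite (_ : kdist _ = mkd R 120 [:: (20, c3 a b c); (20, c3 a b d); (20, c3 a b e); (20, c3 a c d); (20, c3 a c e); (20, c3 a d e)]); last first.
    apply: mkd_eq => //=; repeat (apply: cons_eqR; first lra); by [].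
  rewrite (_ : mixture _ = mkd R 120 [:: (12, c3 r a b); (12, c3 r a c); (12, c3 r a d); (12, c3 r a e); (12, c3 r b c); (12, c3 r b d); (12, c3 r b e); (12, c3 r c d); (12, c3 r c e); (12, c3 r d e)]); last first.
    apply: mkd_eq => //=; repeat (apply: cons_eqR; first lra); by [].
  apply: (@dcost_tau' R 120 _ _ [:: (0, 1, 8); (0, 4, 12); (1, 0, 4); (1, 2, 4); (1, 5, 12); (2, 0, 8); (2, 6, 12); (3, 2, 8); (3, 7, 12); (4, 1, 4); (4, 3, 4); (4, 8, 12); (5, 3, 8); (5, 9, 12)]) => //.
  rewrite /nthc /= !costE !eq_cfg !dist_c3 !in_c3; bsimpl.
- move=> y hy; rewrite /omega /ocost /minl /costc /= !dist_c3 !in_c3; bsimpl.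
  move: (cnt3 h0 hy) => /=.
  by move: (a \in y) (b \in y) (c \in y) (d \in y) (e \in y) (r \in y) => [] [] [] [] [] [].
Qed.

Lemma caseE0 (R : realType) (a b c d e : nat) :
  uniq [:: a; b; c; d; e] -> good R (SE a b c d e) a.
Proof.
move=> h0; have h := h0; distinct h.
apply: (@good_intro R (SE a b c d e) a ([:: (1, SE a b c d e)] : seq (R * kstate)) [:: 60] 0).
- by bsimpl.
- by rewrite /wf; bsimpl.
- rewrite /=; repeat (apply: cons_eqR; first lra); by [].
- by [].
- rewrite (_ : kdist _ = mkd R 120 [:: (60, c3 a b c); (30, c3 a b d); (30, c3 a b e)]); last first.
    apply: mkd_eq => //=; repeat (apply: cons_eqR; first lra); by [].
  rewrite (_ : mixture _ = mkd R 120 [:: (60, c3 a b c); (30, c3 a b d); (30, c3 a b e)]); last first.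
    apply: mkd_eq => //=; repeat (apply: cons_eqR; first lra); by [].
  apply: (@dcost_tau' R 120 _ _ [:: (0, 0, 60); (1, 1, 30); (2, 2, 30)]) => //.
  rewrite /nthc /= !costE !eq_cfg !dist_c3 !in_c3; bsimpl.
- move=> y hy; rewrite /omega /ocost /minl /costc /= !dist_c3 !in_c3; bsimpl.
  move: (cnt3 h0 hy) => /=.
  by move: (a \in y) (b \in y) (c \in y) (d \in y) (e \in y) => [] [] [] [] [].
Qed.

Lemma caseE1 (R : realType) (a b c d e : nat) :
  uniq [:: a; b; c; d; e] -> good R (SE a b c d e) b.
Proof.
move=> h0; have h := h0; distinct h.
apply: (@good_intro R (SE a b c d e) b ([:: (1, SE a b c d e)] : seq (R * kstate)) [:: 60] 0).
- by bsimpl.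
- by rewrite /wf; bsimpl.
- rewrite /=; repeat (apply: cons_eqR; first lra); by [].
- by [].
- rewrite (_ : kdist _ = mkd R 120 [:: (60, c3 a b c); (30, c3 a b d); (30, c3 a b e)]); last first.
    apply: mkd_eq => //=; repeat (apply: cons_eqR; first lra); by [].
  rewrite (_ : mixture _ = mkd R 120 [:: (60, c3 a b c); (30, c3 a b d); (30, c3 a b e)]); last first.
    apply: mkd_eq => //=; repeat (apply: cons_eqR; first lra); by [].
  apply: (@dcost_tau' R 120 _ _ [:: (0, 0, 60); (1, 1, 30); (2, 2, 30)]) => //.
  rewrite /nthc /= !costE !eq_cfg !dist_c3 !in_c3; bsimpl.
- move=> y hy; rewrite /omega /ocost /minl /costc /= !dist_c3 !in_c3; bsimpl.
  move: (cnt3 h0 hy) => /=.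
  by move: (a \in y) (b \in y) (c \in y) (d \in y) (e \in y) => [] [] [] [] [].
Qed.

Lemma caseE2 (R : realType) (a b c d e : nat) :
  uniq [:: a; b; c; d; e] -> good R (SE a b c d e) c.
Proof.
move=> h0; have h := h0; distinct h.
apply: (@good_intro R (SE a b c d e) c ([:: (1, SA a b c)] : seq (R * kstate)) [:: 60] 60).
- by bsimpl.
- by rewrite /wf; bsimpl.
- rewrite /=; repeat (apply: cons_eqR; first lra); by [].
- by [].
- rewrite (_ : kdist _ = mkd R 120 [:: (60, c3 a b c); (30, c3 a b d); (30, c3 a b e)]); last first.
    apply: mkd_eq => //=; repeat (apply: cons_eqR; first lra); by [].
  rewrite (_ : mixture _ = mkd R 120 [:: (120, c3 a b c)]); last first.
    apply: mkd_eq => //=; repeat (apply: cons_eqR; first lra); by [].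
  apply: (@dcost_tau' R 120 _ _ [:: (0, 0, 60); (1, 0, 30); (2, 0, 30)]) => //.
  rewrite /nthc /= !costE !eq_cfg !dist_c3 !in_c3; bsimpl.
- move=> y hy; rewrite /omega /ocost /minl /costc /= !dist_c3 !in_c3; bsimpl.
  move: (cnt3 h0 hy) => /=.
  by move: (a \in y) (b \in y) (c \in y) (d \in y) (e \in y) => [] [] [] [] [].
Qed.

Lemma caseE3 (R : realType) (a b c d e : nat) :
  uniq [:: a; b; c; d; e] -> good R (SE a b c d e) d.
Proof.
move=> h0; have h := h0; distinct h.
apply: (@good_intro R (SE a b c d e) d ([:: (1, SA a b d)] : seq (R * kstate)) [:: 60] 90).
- by bsimpl.
- by rewrite /wf; bsimpl.
- rewrite /=; repeat (apply: cons_eqR; first lra); by [].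
- by [].
- rewrite (_ : kdist _ = mkd R 120 [:: (60, c3 a b c); (30, c3 a b d); (30, c3 a b e)]); last first.
    apply: mkd_eq => //=; repeat (apply: cons_eqR; first lra); by [].
  rewrite (_ : mixture _ = mkd R 120 [:: (120, c3 a b d)]); last first.
    apply: mkd_eq => //=; repeat (apply: cons_eqR; first lra); by [].
  apply: (@dcost_tau' R 120 _ _ [:: (0, 0, 60); (1, 0, 30); (2, 0, 30)]) => //.
  rewrite /nthc /= !costE !eq_cfg !dist_c3 !in_c3; bsimpl.
- move=> y hy; rewrite /omega /ocost /minl /costc /= !dist_c3 !in_c3; bsimpl.
  move: (cnt3 h0 hy) => /=.
  by move: (a \in y) (b \in y) (c \in y) (d \in y) (e \in y) => [] [] [] [] [].
Qed.

Lemma caseE4 (R : realType) (a b c d e : nat) :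
  uniq [:: a; b; c; d; e] -> good R (SE a b c d e) e.
Proof.
move=> h0; have h := h0; distinct h.
apply: (@good_intro R (SE a b c d e) e ([:: (1, SA a b e)] : seq (R * kstate)) [:: 60] 90).
- by bsimpl.
- by rewrite /wf; bsimpl.
- rewrite /=; repeat (apply: cons_eqR; first lra); by [].
- by [].
- rewrite (_ : kdist _ = mkd R 120 [:: (60, c3 a b c); (30, c3 a b d); (30, c3 a b e)]); last first.
    apply: mkd_eq => //=; repeat (apply: cons_eqR; first lra); by [].
  rewrite (_ : mixture _ = mkd R 120 [:: (120, c3 a b e)]); last first.
    apply: mkd_eq => //=; repeat (apply: cons_eqR; first lra); by [].
  apply: (@dcost_tau' R 120 _ _ [:: (0, 0, 60); (1, 0, 30); (2, 0, 30)]) => //.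
  rewrite /nthc /= !costE !eq_cfg !dist_c3 !in_c3; bsimpl.
- move=> y hy; rewrite /omega /ocost /minl /costc /= !dist_c3 !in_c3; bsimpl.
  move: (cnt3 h0 hy) => /=.
  by move: (a \in y) (b \in y) (c \in y) (d \in y) (e \in y) => [] [] [] [] [].
Qed.

Lemma caseE5 (R : realType) (a b c d e r : nat) :
  uniq [:: a; b; c; d; e; r] -> good R (SE a b c d e) r.
Proof.
move=> h0; have h := h0; distinct h.
apply: (@good_intro R (SE a b c d e) r ([:: (1, SA r a b)] : seq (R * kstate)) [:: 60] 120).
- by bsimpl.
- by rewrite /wf; bsimpl.
- rewrite /=; repeat (apply: cons_eqR; first lra); by [].
- by [].
- rewrite (_ : kdist _ = mkd R 120 [:: (60, c3 a b c); (30, c3 a b d); (30, c3 a b e)]); last first.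
    apply: mkd_eq => //=; repeat (apply: cons_eqR; first lra); by [].
  rewrite (_ : mixture _ = mkd R 120 [:: (120, c3 r a b)]); last first.
    apply: mkd_eq => //=; repeat (apply: cons_eqR; first lra); by [].
  apply: (@dcost_tau' R 120 _ _ [:: (0, 0, 60); (1, 0, 30); (2, 0, 30)]) => //.
  rewrite /nthc /= !costE !eq_cfg !dist_c3 !in_c3; bsimpl.
- move=> y hy; rewrite /omega /ocost /minl /costc /= !dist_c3 !in_c3; bsimpl.
  move: (cnt3 h0 hy) => /=.
  by move: (a \in y) (b \in y) (c \in y) (d \in y) (e \in y) (r \in y) => [] [] [] [] [] [].
Qed.

Lemma caseF0 (R : realType) (a b c d e : nat) :
  uniq [:: a; b; c; d; e] -> good R (SF a b c d e) a.
Proof.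
move=> h0; have h := h0; distinct h.
apply: (@good_intro R (SF a b c d e) a ([:: (1, SF a b c d e)] : seq (R * kstate)) [:: 60] 0).
- by bsimpl.
- by rewrite /wf; bsimpl.
- rewrite /=; repeat (apply: cons_eqR; first lra); by [].
- by [].
- rewrite (_ : kdist _ = mkd R 120 [:: (60, c3 a b c); (15, c3 a b d); (15, c3 a b e); (15, c3 a c d); (15, c3 a c e)]); last first.
    apply: mkd_eq => //=; repeat (apply: cons_eqR; first lra); by [].
  rewrite (_ : mixture _ = mkd R 120 [:: (60, c3 a b c); (15, c3 a b d); (15, c3 a b e); (15, c3 a c d); (15, c3 a c e)]); last first.
    apply: mkd_eq => //=; repeat (apply: cons_eqR; first lra); by [].
  apply: (@dcost_tau' R 120 _ _ [:: (0, 0, 60); (1, 1, 15); (2, 2, 15); (3, 3, 15); (4, 4, 15)]) => //.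
  rewrite /nthc /= !costE !eq_cfg !dist_c3 !in_c3; bsimpl.
- move=> y hy; rewrite /omega /ocost /minl /costc /= !dist_c3 !in_c3; bsimpl.
  move: (cnt3 h0 hy) => /=.
  by move: (a \in y) (b \in y) (c \in y) (d \in y) (e \in y) => [] [] [] [] [].
Qed.

Lemma caseF1 (R : realType) (a b c d e : nat) :
  uniq [:: a; b; c; d; e] -> good R (SF a b c d e) b.
Proof.
move=> h0; have h := h0; distinct h.
apply: (@good_intro R (SF a b c d e) b ([:: (1, SE a b c d e)] : seq (R * kstate)) [:: 60] 30).
- by bsimpl.
- by rewrite /wf; bsimpl.
- rewrite /=; repeat (apply: cons_eqR; first lra); by [].
- by [].
- rewrite (_ : kdist _ = mkd R 120 [:: (60, c3 a b c); (15, c3 a b d); (15, c3 a b e); (15, c3 a c d); (15, c3 a c e)]); last first.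
    apply: mkd_eq => //=; repeat (apply: cons_eqR; first lra); by [].
  rewrite (_ : mixture _ = mkd R 120 [:: (60, c3 a b c); (30, c3 a b d); (30, c3 a b e)]); last first.
    apply: mkd_eq => //=; repeat (apply: cons_eqR; first lra); by [].
  apply: (@dcost_tau' R 120 _ _ [:: (0, 0, 60); (1, 1, 15); (2, 2, 15); (3, 1, 15); (4, 2, 15)]) => //.
  rewrite /nthc /= !costE !eq_cfg !dist_c3 !in_c3; bsimpl.
- move=> y hy; rewrite /omega /ocost /minl /costc /= !dist_c3 !in_c3; bsimpl.
  move: (cnt3 h0 hy) => /=.
  by move: (a \in y) (b \in y) (c \in y) (d \in y) (e \in y) => [] [] [] [] [].
Qed.

Lemma caseF2 (R : realType) (a b c d e : nat) :
  uniq [:: a; b; c; d; e] -> good R (SF a b c d e) c.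
Proof.
move=> h0; have h := h0; distinct h.
apply: (@good_intro R (SF a b c d e) c ([:: (1, SE a c b d e)] : seq (R * kstate)) [:: 60] 30).
- by bsimpl.
- by rewrite /wf; bsimpl.
- rewrite /=; repeat (apply: cons_eqR; first lra); by [].
- by [].
- rewrite (_ : kdist _ = mkd R 120 [:: (60, c3 a b c); (15, c3 a b d); (15, c3 a b e); (15, c3 a c d); (15, c3 a c e)]); last first.
    apply: mkd_eq => //=; repeat (apply: cons_eqR; first lra); by [].
  rewrite (_ : mixture _ = mkd R 120 [:: (60, c3 a c b); (30, c3 a c d); (30, c3 a c e)]); last first.
    apply: mkd_eq => //=; repeat (apply: cons_eqR; first lra); by [].
  apply: (@dcost_tau' R 120 _ _ [:: (0, 0, 60); (1, 1, 15); (2, 2, 15); (3, 1, 15); (4, 2, 15)]) => //.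
  rewrite /nthc /= !costE !eq_cfg !dist_c3 !in_c3; bsimpl.
- move=> y hy; rewrite /omega /ocost /minl /costc /= !dist_c3 !in_c3; bsimpl.
  move: (cnt3 h0 hy) => /=.
  by move: (a \in y) (b \in y) (c \in y) (d \in y) (e \in y) => [] [] [] [] [].
Qed.

Lemma caseF3 (R : realType) (a b c d e : nat) :
  uniq [:: a; b; c; d; e] -> good R (SF a b c d e) d.
Proof.
move=> h0; have h := h0; distinct h.
apply: (@good_intro R (SF a b c d e) d ([:: (1, SC a d b c)] : seq (R * kstate)) [:: 60] 90).
- by bsimpl.
- by rewrite /wf; bsimpl.
- rewrite /=; repeat (apply: cons_eqR; first lra); by [].
- by [].
- rewrite (_ : kdist _ = mkd R 120 [:: (60, c3 a b c); (15, c3 a b d); (15, c3 a b e); (15, c3 a c d); (15, c3 a c e)]); last first.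
    apply: mkd_eq => //=; repeat (apply: cons_eqR; first lra); by [].
  rewrite (_ : mixture _ = mkd R 120 [:: (60, c3 a d b); (60, c3 a d c)]); last first.
    apply: mkd_eq => //=; repeat (apply: cons_eqR; first lra); by [].
  apply: (@dcost_tau' R 120 _ _ [:: (0, 0, 30); (0, 1, 30); (1, 0, 15); (2, 0, 15); (3, 1, 15); (4, 1, 15)]) => //.
  rewrite /nthc /= !costE !eq_cfg !dist_c3 !in_c3; bsimpl.
- move=> y hy; rewrite /omega /ocost /minl /costc /= !dist_c3 !in_c3; bsimpl.
  move: (cnt3 h0 hy) => /=.
  by move: (a \in y) (b \in y) (c \in y) (d \in y) (e \in y) => [] [] [] [] [].
Qed.

Lemma caseF4 (R : realType) (a b c d e : nat) :
  uniq [:: a; b; c; d; e] -> good R (SF a b c d e) e.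
Proof.
move=> h0; have h := h0; distinct h.
apply: (@good_intro R (SF a b c d e) e ([:: (1, SC a e b c)] : seq (R * kstate)) [:: 60] 90).
- by bsimpl.
- by rewrite /wf; bsimpl.
- rewrite /=; repeat (apply: cons_eqR; first lra); by [].
- by [].
- rewrite (_ : kdist _ = mkd R 120 [:: (60, c3 a b c); (15, c3 a b d); (15, c3 a b e); (15, c3 a c d); (15, c3 a c e)]); last first.
    apply: mkd_eq => //=; repeat (apply: cons_eqR; first lra); by [].
  rewrite (_ : mixture _ = mkd R 120 [:: (60, c3 a e b); (60, c3 a e c)]); last first.
    apply: mkd_eq => //=; repeat (apply: cons_eqR; first lra); by [].
  apply: (@dcost_tau' R 120 _ _ [:: (0, 0, 30); (0, 1, 30); (1, 0, 15); (2, 0, 15); (3, 1, 15); (4, 1, 15)]) => //.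
  rewrite /nthc /= !costE !eq_cfg !dist_c3 !in_c3; bsimpl.
- move=> y hy; rewrite /omega /ocost /minl /costc /= !dist_c3 !in_c3; bsimpl.
  move: (cnt3 h0 hy) => /=.
  by move: (a \in y) (b \in y) (c \in y) (d \in y) (e \in y) => [] [] [] [] [].
Qed.

Lemma caseF5 (R : realType) (a b c d e r : nat) :
  uniq [:: a; b; c; d; e; r] -> good R (SF a b c d e) r.
Proof.
move=> h0; have h := h0; distinct h.
apply: (@good_intro R (SF a b c d e) r ([:: (1/6, SC r a b c); (1/6, SC r b a c); (1/6, SC r c a b); (1/6, SC r a d e); (1/6, SC r b d e); (1/6, SC r c d e)] : seq (R * kstate)) [:: 10; 10; 10; 10; 10; 10] 120).
- by bsimpl.
- by rewrite /wf; bsimpl.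
- rewrite /=; repeat (apply: cons_eqR; first lra); by [].
- by [].
- rewrite (_ : kdist _ = mkd R 120 [:: (60, c3 a b c); (15, c3 a b d); (15, c3 a b e); (15, c3 a c d); (15, c3 a c e)]); last first.
    apply: mkd_eq => //=; repeat (apply: cons_eqR; first lra); by [].
  rewrite (_ : mixture _ = mkd R 120 [:: (10, c3 r a b); (10, c3 r a c); (10, c3 r b a); (10, c3 r b c); (10, c3 r c a); (10, c3 r c b); (10, c3 r a d); (10, c3 r a e); (10, c3 r b d); (10, c3 r b e); (10, c3 r c d); (10, c3 r c e)]); last first.
    apply: mkd_eq => //=; repeat (apply: cons_eqR; first lra); by [].
  apply: (@dcost_tau' R 120 _ _ [:: (0, 0, 10); (0, 1, 10); (0, 2, 10); (0, 3, 10); (0, 4, 10); (0, 5, 10); (1, 6, 5); (1, 8, 10); (2, 7, 5); (2, 9, 10); (3, 6, 5); (3, 10, 10); (4, 7, 5); (4, 11, 10)]) => //.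
  rewrite /nthc /= !costE !eq_cfg !dist_c3 !in_c3; bsimpl.
- move=> y hy; rewrite /omega /ocost /minl /costc /= !dist_c3 !in_c3; bsimpl.
  move: (cnt3 h0 hy) => /=.
  by move: (a \in y) (b \in y) (c \in y) (d \in y) (e \in y) (r \in y) => [] [] [] [] [] [].
Qed.


Lemma good_all (R : realType) s r : wf s -> good R s r.
Proof.
case: s => [a b c|a b c d|a b c d|a b c d e|a b c d e|a b c d e]; rewrite /wf => h.
- have [->|ra] := eqVneq r a; first by apply: caseA0.
  have [->|rb] := eqVneq r b; first by apply: caseA1.
  have [->|rc] := eqVneq r c; first by apply: caseA2.
  apply: caseA3; change (uniq (rcons [:: a; b; c] r)).
  by rewrite rcons_uniq h andbT !inE !negb_or ra rb rc.
- have [->|ra] := eqVneq r a; first by apply: caseB0.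
  have [->|rb] := eqVneq r b; first by apply: caseB1.
  have [->|rc] := eqVneq r c; first by apply: caseB2.
  have [->|rd] := eqVneq r d; first by apply: caseB3.
  apply: caseB4; change (uniq (rcons [:: a; b; c; d] r)).
  by rewrite rcons_uniq h andbT !inE !negb_or ra rb rc rd.
- have [->|ra] := eqVneq r a; first by apply: caseC0.
  have [->|rb] := eqVneq r b; first by apply: caseC1.
  have [->|rc] := eqVneq r c; first by apply: caseC2.
  have [->|rd] := eqVneq r d; first by apply: caseC3.
  apply: caseC4; change (uniq (rcons [:: a; b; c; d] r)).
  by rewrite rcons_uniq h andbT !inE !negb_or ra rb rc rd.
- have [->|ra] := eqVneq r a; first by apply: caseD0.
  have [->|rb] := eqVneq r b; first by apply: caseD1.
  have [->|rc] := eqVneq r c; first by apply: caseD2.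
  have [->|rd] := eqVneq r d; first by apply: caseD3.
  have [->|re] := eqVneq r e; first by apply: caseD4.
  apply: caseD5; change (uniq (rcons [:: a; b; c; d; e] r)).
  by rewrite rcons_uniq h andbT !inE !negb_or ra rb rc rd re.
- have [->|ra] := eqVneq r a; first by apply: caseE0.
  have [->|rb] := eqVneq r b; first by apply: caseE1.
  have [->|rc] := eqVneq r c; first by apply: caseE2.
  have [->|rd] := eqVneq r d; first by apply: caseE3.
  have [->|re] := eqVneq r e; first by apply: caseE4.
  apply: caseE5; change (uniq (rcons [:: a; b; c; d; e] r)).
  by rewrite rcons_uniq h andbT !inE !negb_or ra rb rc rd re.
- have [->|ra] := eqVneq r a; first by apply: caseF0.
  have [->|rb] := eqVneq r b; first by apply: caseF1.
  have [->|rc] := eqVneq r c; first by apply: caseF2.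
  have [->|rd] := eqVneq r d; first by apply: caseF3.
  have [->|re] := eqVneq r e; first by apply: caseF4.
  apply: caseF5; change (uniq (rcons [:: a; b; c; d; e] r)).
  by rewrite rcons_uniq h andbT !inE !negb_or ra rb rc rd re.
Qed.

Theorem mainTheorem13 (R : realType) (a b c : nat) :
  uniq [:: a; b; c] ->
  exists K : R, forall rho : seq nat,
    kexp_cost (SA a b c) rho <= 11 / 6 * cost_opt (c3 a b c) rho + K.
Proof. move=> u; apply: final u => s r; exact: good_all. Qed.
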